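(* Let $m\ge 2$. For $1\le l\le m$ let $M_l=\{[i,j]: i\ne j,\ i+j\equiv 2l-1 \pmod{2m}\}$. Each $M_l$ is an SPM of $CK(2m)$, the sets $M_1,\dots,M_m$ are pairwise disjoint, and every blocker $B$ in $CK(2m)$ satisfies $|B\cap M_l|=1$ for every $l=1,\dots,m$. In particular, a blocker contains no two distinct edges that are parallel (i.e., $[i,j],[i',j']$ with $i+j\equiv i'+j'\pmod{2m}$) when these have odd order.
   Context: $CK(2m)$ denotes the complete convex geometric graph whose vertices are the $2m$ vertices of a convex polygon, labelled cyclically $0,1,\dots,2m-1$ (labels modulo $2m$), and whose edges are all straight segments between pairs of vertices. Two edges with four distinct endpoints cross iff their endpoints alternate in the cyclic order. A simple perfect matching (SPM) is a set of $m$ edges that are pairwise disjoint (no common endpoint and no crossing). A blocking set is a set of edges containing at least one edge of every SPM. A blocker is a blocking set with exactly $m$ edges. The order of the edge $[i,i+k]$ ($0<k<2m$) is $\min(k,2m-k)$. *)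

(* Defs.v *)
From mathcomp Require Import all_boot.
Set Implicit Arguments. Unset Strict Implicit. Unset Printing Implicit Defensive.

(* Vertices of CK(n) are 'I_n (labels 0..n-1 in cyclic order, n = 2m).
   An edge is a 2-element set of vertices; [set i; j] is the edge [i,j]. *)
Section CK.
Variable n : nat.
Local Notation V := 'I_n.

Definition is_edge (e : {set V}) : bool := #|e| == 2.

(* e = {a,b}, f = {c,d} with a < c < b < d: endpoints alternate
   in the cyclic order (labels are listed cyclically). *)
Definition cross_dir (e f : {set V}) : bool :=
  [exists a : V, exists b : V, exists c : V, exists d : V,
     [&& e == [set a; b], f == [set c; d], (a < c)%N, (c < b)%N & (b < d)%N]].

Definition cross (e f : {set V}) : bool := cross_dir e f || cross_dir f e.

Definition edges_disjoint (e f : {set V}) : bool :=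
  (e :&: f == set0) && ~~ cross e f.

Definition SPM (M : {set {set V}}) : bool :=
  [forall e in M, is_edge e] && (#|M| == n./2) &&
  [forall e in M, forall f in M, (e != f) ==> edges_disjoint e f].

Definition blocking (B : {set {set V}}) : Prop :=
  (forall e, e \in B -> is_edge e) /\
  forall M, SPM M -> exists e, e \in B /\ e \in M.

Definition blocker (B : {set {set V}}) : Prop := blocking B /\ #|B| = n./2.

Definition Ml (l : nat) : {set {set V}} :=
  [set e | [exists i : V, exists j : V,
     [&& e == [set i; j], i != j & (i + j) %% n == (2 * l - 1) %% n]]].

Definition edge_order (i j : V) : nat :=
  let k := (j + n - i) %% n in minn k (n - k).

End CK.

(* Main.v *)
Require Import Defs.
From mathcomp Require Import all_boot.
From Stdlib Require Import Lia.
Set Implicit Arguments.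

Ltac prep := repeat match goal with
  | H : is_true (_ <= _) |- _ => move/leP: H => H
  | H : is_true (_ < _) |- _ => move/ltP: H => H
  | H : is_true (_ == _) |- _ => move/eqP: H => H
  | H : is_true (~~ (_ == _)) |- _ => move/eqP: H => H
  | |- is_true _ -> _ => intro
  | |- is_true (_ && _) => apply/andP; split
  | H : is_true (_ && _) |- _ => case/andP: H => ? ?
  | H : is_true (~~ (_ && _)) |- _ => rewrite negb_and in H
  | H : is_true (_ || _) |- _ => case/orP: H => H
  | H : is_true (~~ (_ <= _)) |- _ => rewrite -ltnNge in H
  | H : is_true (~~ (_ < _)) |- _ => rewrite -leqNgt in H
  | |- is_true (_ <= _) => apply/leP
  | |- is_true (_ < _) => apply/ltP
  | |- is_true (_ == _) => apply/eqP
  | |- is_true (~~ (_ == _)) => apply/eqP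
  | H : context [addn ?a ?b] |- _ => change (addn a b) with (Nat.add a b) in H
  | |- context [addn ?a ?b] => change (addn a b) with (Nat.add a b)
  | H : context [subn ?a ?b] |- _ => change (subn a b) with (Nat.sub a b) in H
  | |- context [subn ?a ?b] => change (subn a b) with (Nat.sub a b)
  | H : context [muln ?a ?b] |- _ => change (muln a b) with (Nat.mul a b) in H
  | |- context [muln ?a ?b] => change (muln a b) with (Nat.mul a b)
  end.
Ltac nlia := prep; lia.

Lemma mod2 (n a : nat) : 0 < n -> a < 2 * n ->
  (a %% n = a /\ a < n) \/ (a %% n = a - n /\ n <= a).
Proof.
move=> n0 h; case: (ltnP a n) => h1; first by left; rewrite modn_small.
right; split => //.
have -> : a = (a - n) + n by rewrite subnK.
rewrite modnDr modn_small; first by rewrite addnK.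
nlia.
Qed.

Lemma mem_Ml n l e : reflect (exists i j : 'I_n,
   [/\ e = [set i; j], i != j & (i + j) %% n = (2 * l - 1) %% n]) (e \in Ml n l).
Proof.
rewrite inE; apply: (iffP existsP).
  by case=> i /existsP [j /and3P [/eqP -> ? /eqP ?]]; exists i, j.
case=> i [j [-> ? ?]]; exists i; apply/existsP; exists j.
by apply/and3P; split => //; apply/eqP.
Qed.

Lemma set2_sum n (a b i j : 'I_n) : [set a; b] = [set i; j] -> (a + b = i + j)%N.
Proof.
move=> E.
have Ha : a \in [set i; j] by rewrite -E set21.
have Hb : b \in [set i; j] by rewrite -E set22.
have Hi : i \in [set a; b] by rewrite E set21.
have Hj : j \in [set a; b] by rewrite E set22.
move: Ha Hb Hi Hj; rewrite !inE.
case/orP => /eqP/(f_equal val) /= ?; case/orP => /eqP/(f_equal val) /= ?;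
case/orP => /eqP/(f_equal val) /= ?; case/orP => /eqP/(f_equal val) /= ?; nlia.
Qed.

Lemma Ml_sum n l e (a b : 'I_n) : e \in Ml n l -> e = [set a; b] ->
  (a + b) %% n = (2 * l - 1) %% n.
Proof.
case/mem_Ml => i [j [-> _ h]] E.
by rewrite (set2_sum (esym E)).
Qed.

Lemma cross_Ml n l e f : 0 < n -> e \in Ml n l -> f \in Ml n l -> ~~ cross_dir e f.
Proof.
move=> n0 he hf; apply/negP.
case/existsP => a /existsP [b] /existsP [c] /existsP [d] /and5P [/eqP ea /eqP fc h1 h2 h3].
have E1 := Ml_sum he ea; have E2 := Ml_sum hf fc.
have := ltn_ord d; have := ltn_ord b.
have : (a + b) %% n = (c + d) %% n by rewrite E1 E2.
move=> E hb hd.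
have [[X1 Y1]|[X1 Y1]] := @mod2 _ (a + b) n0 ltac:(nlia);
have [[X2 Y2]|[X2 Y2]] := @mod2 _ (c + d) n0 ltac:(nlia); nlia.
Qed.

Lemma Ml_mem n l e (x : 'I_n) : e \in Ml n l -> x \in e ->
  exists y : 'I_n, e = [set x; y] /\ (x + y) %% n = (2 * l - 1) %% n.
Proof.
case/mem_Ml => i [j [E _ h]]; rewrite E !inE => /orP [] /eqP ->.
  by exists j.
by exists i; rewrite setUC addnC.
Qed.

Lemma meet_Ml n l e f : 0 < n -> e \in Ml n l -> f \in Ml n l -> e != f ->
  e :&: f == set0.
Proof.
move=> n0 he hf ne; apply/eqP/setP => x; rewrite !inE.
apply/negP => /andP [xe xf].
have [y [Ey hy]] := Ml_mem he xe.
have [z [Ez hz]] := Ml_mem hf xf.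
have : y = z.
  apply: val_inj => /=.
  have := ltn_ord x; have := ltn_ord y; have := ltn_ord z.
  have : (x + y) %% n = (x + z) %% n by rewrite hy hz.
  move=> E hz' hy' hx'.
  have [[X1 Y1]|[X1 Y1]] := @mod2 _ (x + y) n0 ltac:(nlia);
  have [[X2 Y2]|[X2 Y2]] := @mod2 _ (x + z) n0 ltac:(nlia); nlia.
by move=> yz; move/eqP: ne; apply; rewrite Ey Ez yz.
Qed.

Definition ov {m} (hm : 0 < 2 * m) k : 'I_(2 * m) := Ordinal (ltn_pmod k hm).
Definition fm {m} (hm : 0 < 2 * m) l (t : 'I_m) : {set 'I_(2 * m)} :=
  [set ov hm (l + t); ov hm (2 * m + l - 1 - t)].

Ltac msplit hm x := have [[? ?]|[? ?]] := @mod2 _ x hm ltac:(nlia).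

Lemma card_Ml m l (hm : 0 < 2 * m) : 1 <= l <= m -> #|Ml (2 * m) l| = m.
Proof.
move=> /andP [l1 lm].
have -> : Ml (2 * m) l = fm hm l @: setT.
  apply/setP => e; apply/mem_Ml/imsetP.
  - case=> i [j [-> ij h]].
    have := ltn_ord i; have := ltn_ord j => hj hi.
    have h' : (i + j) %% (2 * m) = 2 * l - 1 by rewrite h modn_small //; nlia.
    msplit hm (i + j).
    + have [c1|c1] := boolP ((l <= i) && (i < l + m)).
      * have ht : i - l < m by nlia.
        exists (Ordinal ht) => //; rewrite /fm; congr [set _; _]; apply: val_inj => /=.
          msplit hm (l + (i - l)); nlia.
        msplit hm (2 * m + l - 1 - (i - l)); nlia.
      * have ht : j - l < m by nlia.
        exists (Ordinal ht) => //; rewrite /fm setUC; congr [set _; _]; apply: val_inj => /=.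
          msplit hm (l + (j - l)); nlia.
        msplit hm (2 * m + l - 1 - (j - l)); nlia.
    + have [c1|c1] := boolP ((l <= i) && (i < l + m)).
      * have ht : i - l < m by nlia.
        exists (Ordinal ht) => //; rewrite /fm; congr [set _; _]; apply: val_inj => /=.
          msplit hm (l + (i - l)); nlia.
        msplit hm (2 * m + l - 1 - (i - l)); nlia.
      * have ht : j - l < m by nlia.
        exists (Ordinal ht) => //; rewrite /fm setUC; congr [set _; _]; apply: val_inj => /=.
          msplit hm (l + (j - l)); nlia.
        msplit hm (2 * m + l - 1 - (j - l)); nlia.
  - case=> t _ ->; exists (ov hm (l + t)), (ov hm (2 * m + l - 1 - t)); split => //.
      have := ltn_ord t => ht.
      apply/eqP => /(f_equal val) /=.
      msplit hm (l + t); msplit hm (2 * m + l - 1 - t); nlia.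
    have := ltn_ord t => ht /=.
    rewrite [in RHS]modn_small; last by nlia.
    msplit hm (l + t); msplit hm (2 * m + l - 1 - t);
    msplit hm ((l + t) %% (2 * m) + (2 * m + l - 1 - t) %% (2 * m)); nlia.
rewrite card_imset ?cardsT ?card_ord //.
move=> t t' E.
have : ov hm (l + t) \in fm hm l t' by rewrite -E set21.
have := ltn_ord t; have := ltn_ord t' => h1 h2.
rewrite !inE => /orP [] /eqP/(f_equal val) /= H; apply: val_inj => /=.
  msplit hm (l + t); msplit hm (l + t'); nlia.
msplit hm (l + t); msplit hm (2 * m + l - 1 - t'); nlia.
Qed.

Lemma odd_eo m (a b : 'I_(2 * m)) : odd (edge_order a b) -> odd (a + b).
Proof.
rewrite /edge_order.
have hm : 0 < 2 * m by apply: (leq_ltn_trans (leq0n a)).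
set k := (b + 2 * m - a) %% (2 * m).
have kl : k <= 2 * m by apply: ltnW; apply: ltn_pmod.
have E : odd (2 * m - k) = odd k by rewrite oddB // oddM /=.
have Ek : odd k = odd (a + b).
  rewrite /k odd_mod ?oddM // oddB; last by have := ltn_ord a => ?; nlia.
  by rewrite oddD oddM /= addbF oddD addbC.
rewrite /minn; case: ifP => _; by rewrite ?E Ek.
Qed.

Unset Implicit Arguments.

Theorem mainTheorem4 (m : nat) (hm : (2 <= m)%N) :
  (forall l, (1 <= l <= m)%N -> SPM (Ml (2 * m) l)) /\
  (forall l l', (1 <= l <= m)%N -> (1 <= l' <= m)%N -> l != l' ->
     [disjoint Ml (2 * m) l & Ml (2 * m) l']) /\
  (forall B : {set {set 'I_(2 * m)}}, blocker B ->
     forall l, (1 <= l <= m)%N -> #|B :&: Ml (2 * m) l| = 1) /\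
  (forall B : {set {set 'I_(2 * m)}}, blocker B ->
     forall i j i' j' : 'I_(2 * m),
       i != j -> i' != j' ->
       [set i; j] \in B -> [set i'; j'] \in B ->
       [set i; j] != [set i'; j'] ->
       (i + j) %% (2 * m) = (i' + j') %% (2 * m) ->
       odd (edge_order i j) -> odd (edge_order i' j') -> False).
Proof.
have hm0 : 0 < 2 * m by nlia.
have half : (2 * m)./2 = m by rewrite mul2n doubleK.
have spm : forall l, (1 <= l <= m)%N -> SPM (Ml (2 * m) l).
  move=> l hl; apply/andP; split; [apply/andP; split|].
  - apply/forallP => e; apply/implyP => /mem_Ml [i [j [-> ij _]]].
    by rewrite /is_edge cards2 ij.
  - by rewrite card_Ml // half.
  - apply/forallP => e; apply/implyP => he; apply/forallP => f; apply/implyP => hf.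
    apply/implyP => ne; rewrite /edges_disjoint; apply/andP; split; first exact: (meet_Ml hm0 he hf ne).
    by rewrite /cross negb_or (cross_Ml hm0 he hf) (cross_Ml hm0 hf he).
have dis : forall l l', (1 <= l <= m)%N -> (1 <= l' <= m)%N -> l != l' ->
     [disjoint Ml (2 * m) l & Ml (2 * m) l'].
  move=> l l' hl hl' ne; rewrite -setI_eq0; apply/eqP/setP => e; rewrite in_setI in_set0.
  apply/negP => /andP [h1 h2].
  move/mem_Ml: h1 => [i [j [E _ h]]].
  have h' := Ml_sum h2 E.
  rewrite h !modn_small in h'; try nlia.
have p3 : forall B : {set {set 'I_(2 * m)}}, blocker B ->
     forall l, (1 <= l <= m)%N -> #|B :&: Ml (2 * m) l| = 1.
  move=> B [[Bedge Bblock] cB] l hl.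
  have ex : forall k, 1 <= k <= m -> exists e, e \in B :&: Ml (2 * m) k.
    move=> k hk; have [e [h1 h2]] := Bblock _ (spm k hk).
    by exists e; rewrite in_setI h1 h2.
  apply/eqP; rewrite eqn_leq; apply/andP; split; last first.
    by have [e he] := ex l hl; apply/card_gt0P; exists e.
  rewrite leqNgt; apply/negP => /card_gt1P [e1 [e2 [h1 h2 ne]]].
  pose g (k : 'I_m) := if k.+1 == l then e1
                       else odflt set0 [pick e in B :&: Ml (2 * m) k.+1].
  have gM : forall k : 'I_m, g k \in B :&: Ml (2 * m) k.+1.
    move=> k; rewrite /g; case: eqP => [->|_] //.
    case: pickP => [x //|H].
    have [e he] := ex k.+1 ltac:(pose proof (ltn_ord k); nlia).
    by move: (H e); rewrite /= he.
  have ginj : injective g.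
    move=> a b E; have := gM a; have := gM b; rewrite E !in_setI => /andP [_ Hb] /andP [_ Ha].
    case: (eqVneq a b) => // nab; exfalso.
    have D := dis a.+1 b.+1 ltac:(pose proof (ltn_ord a); nlia) ltac:(pose proof (ltn_ord b); nlia)
      ltac:(by rewrite eqSS).
    move: D; rewrite -setI_eq0 => /eqP/setP/(_ (g b)); by rewrite in_setI in_set0 Ha Hb.
  have gne : forall k, g k != e2.
    move=> k; case: (eqVneq (k.+1) l) => [kl|kl].
      by rewrite /g kl eqxx.
    apply/eqP => E; have := gM k; rewrite E in_setI => /andP [_ Hk].
    move: (h2); rewrite in_setI => /andP [_ h2'].
    have D := dis k.+1 l ltac:(pose proof (ltn_ord k); nlia) hl kl.
    move: D; rewrite -setI_eq0 => /eqP/setP/(_ e2); by rewrite in_setI in_set0 Hk h2'.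
  have sub : g @: setT \subset B :\ e2.
    apply/subsetP => x /imsetP [k _ ->]; rewrite in_setD1 gne /=.
    by have := gM k; rewrite in_setI => /andP [].
  have := subset_leq_card sub; rewrite card_imset // cardsT card_ord.
  have := cardsD1 e2 B; move: h2; rewrite in_setI => /andP [-> _].
  rewrite cB half /= => H1 H2; nlia.
split; first exact: spm.
split; first exact: dis.
split; first exact: p3.
move=> B hB i j i' j' ij ij' hi hj ne hs oi oi'.
have os : odd ((i + j) %% (2 * m)) by rewrite odd_mod ?oddM //; exact: odd_eo.
set s := (i + j) %% (2 * m) in os hs.
have sl : s < 2 * m by apply: ltn_pmod.
have ods := odd_double_half s; rewrite os /= -mul2n in ods.
pose l := (s./2).+1.
have hl : 1 <= l <= m by rewrite /l; nlia.
have sE : (2 * l - 1) %% (2 * m) = s by rewrite modn_small /l; nlia.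
have M1 : [set i; j] \in Ml (2 * m) l by apply/mem_Ml; exists i, j; split => //; rewrite sE.
have M2 : [set i'; j'] \in Ml (2 * m) l by apply/mem_Ml; exists i', j'; split => //; rewrite sE.
have := p3 B hB l hl.
have : [set [set i; j]; [set i'; j']] \subset B :&: Ml (2 * m) l.
  by apply/subsetP => x; rewrite in_set2 => /orP [] /eqP ->; rewrite in_setI ?hi ?hj ?M1 ?M2.
move/subset_leq_card; rewrite cards2 ne /= => h1 h2; by rewrite h2 in h1.
Qed.
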